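(* If $D$ is a weakly locally finite division ring, then the center $Z(D')$ of the derived subgroup $D'=[D^*,D^*]$ of $D^*$ is a torsion group.
   Context: A division ring is weakly locally finite if the division subring generated by any finite subset is finite dimensional over its own center. *)

(* Defs.v *)
From mathcomp Require Import all_boot all_order all_algebra.
Set Implicit Arguments. Unset Strict Implicit. Unset Printing Implicit Defensive.
Import GRing.Theory.
Local Open Scope ring_scope.

Definition is_division_ring (D : unitRingType) : Prop :=
  forall x : D, x != 0 -> x \is a GRing.unit.

Inductive divsub (D : unitRingType) (S : seq D) : D -> Prop :=
  | divsub_mem x : x \in S -> divsub S x
  | divsub_one : divsub S 1
  | divsub_sub a b : divsub S a -> divsub S b -> divsub S (a - b)
  | divsub_mul a b : divsub S a -> divsub S b -> divsub S (a * b)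
  | divsub_inv a : divsub S a -> divsub S a^-1.

Definition divsub_center (D : unitRingType) (S : seq D) (x : D) : Prop :=
  divsub S x /\ forall y, divsub S y -> x * y = y * x.

(* The division subring generated by S is finite dimensional (as a left
   vector space) over its own center: it has a finite spanning family. *)
Definition divsub_findim (D : unitRingType) (S : seq D) : Prop :=
  exists B : seq D, (forall b, b \in B -> divsub S b) /\
    forall x, divsub S x ->
      exists c : 'I_(size B) -> D, (forall i, divsub_center S (c i)) /\
        x = \sum_(i < size B) c i * B`_i.

Definition weakly_locally_finite (D : unitRingType) : Prop :=
  forall S : seq D, divsub_findim S.

Inductive derived (D : unitRingType) : D -> Prop :=
  | derived_comm x y : x != 0 -> y != 0 -> derived (x * y * x^-1 * y^-1)
  | derived_mul a b : derived a -> derived b -> derived (a * b)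
  | derived_inv a : derived a -> derived a^-1.

Definition derived_center (D : unitRingType) (x : D) : Prop :=
  derived x /\ forall y, derived y -> x * y = y * x.

(* Main.v *)
From HB Require Import structures.
Require Import Defs.
From mathcomp Require Import all_boot all_order all_algebra.
From mathcomp Require Import boolp.
From Stdlib Require Import Classical_Prop.
From mathcomp Require Import ring.
Set Implicit Arguments. Unset Strict Implicit. Unset Printing Implicit Defensive.
Import GRing.Theory.
Local Open Scope ring_scope.

Lemma divsub0 (D : unitRingType) (S : seq D) : divsub S 0.
Proof. by rewrite -(subrr 1); apply: divsub_sub; apply: divsub_one. Qed.

Lemma divsubN (D : unitRingType) (S : seq D) a : divsub S a -> divsub S (- a).
Proof. by move=> h; rewrite -sub0r; apply: divsub_sub => //; apply: divsub0. Qed.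

Lemma divsubD (D : unitRingType) (S : seq D) a b :
  divsub S a -> divsub S b -> divsub S (a + b).
Proof. by move=> ha hb; rewrite -(opprK b); apply: divsub_sub => //; apply: divsubN. Qed.

Lemma divsub_sum (D : unitRingType) (S : seq D) m (f : 'I_m -> D) :
  (forall i, divsub S (f i)) -> divsub S (\sum_i f i).
Proof.
move=> h; elim/big_ind: _ => //; first exact: divsub0.
by move=> *; apply: divsubD.
Qed.

Lemma cen0 (D : unitRingType) (S : seq D) : divsub_center S 0.
Proof. by split; [apply: divsub0 | move=> y _; rewrite mul0r mulr0]. Qed.

Lemma cen1 (D : unitRingType) (S : seq D) : divsub_center S 1.
Proof. by split; [apply: divsub_one | move=> y _; rewrite mul1r mulr1]. Qed.

Lemma cenB (D : unitRingType) (S : seq D) a b :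
  divsub_center S a -> divsub_center S b -> divsub_center S (a - b).
Proof.
move=> [ha ca] [hb cb]; split; first exact: divsub_sub.
by move=> y hy; rewrite mulrBl mulrBr ca // cb.
Qed.

Lemma cenN (D : unitRingType) (S : seq D) a :
  divsub_center S a -> divsub_center S (- a).
Proof. by move=> h; rewrite -sub0r; apply: cenB => //; apply: cen0. Qed.

Lemma cenD (D : unitRingType) (S : seq D) a b :
  divsub_center S a -> divsub_center S b -> divsub_center S (a + b).
Proof. by move=> ha hb; rewrite -(opprK b); apply: cenB => //; apply: cenN. Qed.

Lemma cenM (D : unitRingType) (S : seq D) a b :
  divsub_center S a -> divsub_center S b -> divsub_center S (a * b).
Proof.
move=> [ha ca] [hb cb]; split; first exact: divsub_mul.
by move=> y hy; rewrite -mulrA cb // mulrA ca // mulrA.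
Qed.

Lemma cenV (D : unitRingType) (S : seq D) a :
  divsub_center S a -> divsub_center S a^-1.
Proof.
move=> [ha ca]; split; first exact: divsub_inv.
move=> y hy; have [u|nu] := boolP (a \is a GRing.unit); last first.
  by rewrite (invr_out nu) ca.
apply: (mulrI u); rewrite mulrA mulrV // mul1r.
by rewrite mulrA ca // -mulrA mulrV // mulr1.
Qed.

Lemma cen_sum (D : unitRingType) (S : seq D) m (f : 'I_m -> D) :
  (forall i, divsub_center S (f i)) -> divsub_center S (\sum_i f i).
Proof.
move=> h; elim/big_ind: _ => //; first exact: cen0.
by move=> *; apply: cenD.
Qed.

Definition spans (D : unitRingType) (S : seq D) m (b : 'I_m -> D) :=
  (forall i, divsub S (b i)) /\ forall y, divsub S y ->
  exists c : 'I_m -> D, (forall i, divsub_center S (c i)) /\ y = \sum_i c i * b i.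

Definition indep (D : unitRingType) (S : seq D) m (b : 'I_m -> D) :=
  forall c : 'I_m -> D, (forall i, divsub_center S (c i)) ->
  \sum_i c i * b i = 0 -> forall i, c i = 0.

Lemma reduce (D : unitRingType) (S : seq D) m (b : 'I_m.+1 -> D) :
  is_division_ring D -> spans S b -> ~ indep S b ->
  exists b' : 'I_m -> D, spans S b'.
Proof.
move=> hD [bK sp] ni.
have [c [cc [s0 [k ck]]]] : exists c : 'I_m.+1 -> D, (forall i, divsub_center S (c i)) /\
   \sum_i c i * b i = 0 /\ exists k, c k <> 0.
  apply: NNPP => hn; apply: ni => c cc s0 i; apply: NNPP => hi.
  by apply: hn; exists c; split => //; split => //; exists i.
have uk : c k \is a GRing.unit by apply: hD; apply/eqP.
exists (fun i => b (lift k i)); split; first by move=> i; apply: bK.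
move=> y /sp [d [dc ->]].
rewrite (bigD1_ord k) //= in s0 *.
have bk : b k = - ((c k)^-1 * \sum_(i < m) c (lift k i) * b (lift k i)).
  apply: (mulrI uk); rewrite mulrN mulrA mulrV // mul1r.
  by apply/eqP; rewrite -addr_eq0 s0.
exists (fun i => d (lift k i) - d k * (c k)^-1 * c (lift k i)); split.
  by move=> i; apply: cenB => //; apply: cenM => //; apply: cenM => //; apply: cenV.
rewrite (bigD1_ord k) //=.
rewrite bk mulrN mulr_sumr mulr_sumr -sumrN -big_split /=.
by apply: eq_bigr => i _; rewrite mulrBl addrC !mulrA.
Qed.

Lemma exists_basis (D : unitRingType) (S : seq D) :
  is_division_ring D -> divsub_findim S ->
  exists m (b : 'I_m -> D), spans S b /\ indep S b.
Proof.
move=> hD [B [BK sp]].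
have : exists b : 'I_(size B) -> D, spans S b.
  by exists (fun i => B`_i); split => // i; apply: BK; apply: mem_nth.
elim: (size B) => [|m IH] [b hb].
  by exists 0%N, b; split => // c _ _ [].
have [ind|nind] := classic (indep S b); first by exists m.+1, b.
by apply: IH; apply: reduce nind.
Qed.

Definition cen (D : unitRingType) (S : seq D) : pred D :=
  fun y => `[< divsub_center S y >].

Lemma cenP (D : unitRingType) (S : seq D) y : reflect (divsub_center S y) (y \in cen S).
Proof. exact: asboolP. Qed.

Lemma cen_subring (D : unitRingType) (S : seq D) : subring_closed (cen S).
Proof.
split.
- by apply/cenP; apply: cen1.
- by move=> a b /cenP ha /cenP hb; apply/cenP; apply: cenB.
- by move=> a b /cenP ha /cenP hb; apply/cenP; apply: cenM.
Qed.

Record FT (D : unitRingType) (S : seq D) := MkF { fval :> D; fvalP : fval \in cen S }.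

HB.instance Definition _ (D : unitRingType) (S : seq D) := [isSub for @fval D S].
HB.instance Definition _ (D : unitRingType) (S : seq D) := [Choice of FT S by <:].
HB.instance Definition _ (D : unitRingType) (S : seq D) :=
  GRing.SubChoice_isSubNzRing.Build D (cen S) (FT S) (cen_subring S).

Lemma FT_mulC (D : unitRingType) (S : seq D) : commutative (@GRing.mul (FT S)).
Proof.
move=> [a ha] [b hb]; apply: val_inj => /=.
case/cenP: ha => _ ca; case/cenP: hb => hb _.
by rewrite ca.
Qed.

HB.instance Definition _ (D : unitRingType) (S : seq D) :=
  GRing.PzRing_hasCommutativeMul.Build (FT S) (@FT_mulC D S).


Lemma fvalM (D : unitRingType) (S : seq D) (x y : FT S) : val (x * y) = val x * val y.
Proof. exact: (rmorphM val). Qed.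
Lemma fval_sum (D : unitRingType) (S : seq D) m (f : 'I_m -> FT S) : val (\sum_i f i) = \sum_i val (f i).
Proof. exact: (rmorph_sum val). Qed.

Definition coord (D : unitRingType) (S : seq D) m (b : 'I_m -> D) (y : D) : 'I_m -> D :=
  match pselect (exists c : 'I_m -> D, (forall i, divsub_center S (c i)) /\ y = \sum_i c i * b i) with
  | left h => proj1_sig (cid h)
  | right _ => fun _ => 0
  end.

Lemma coordP (D : unitRingType) (S : seq D) m (b : 'I_m -> D) y :
  spans S b -> divsub S y ->
  (forall i, divsub_center S (coord S b y i)) /\ y = \sum_i coord S b y i * b i.
Proof.
move=> [_ sp] /sp h; rewrite /coord; case: pselect => [h'|//].
by case: (cid h') => c /=.
Qed.

Lemma coord_uniq (D : unitRingType) (S : seq D) m (b : 'I_m -> D) y c :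
  spans S b -> indep S b -> divsub S y -> (forall i, divsub_center S (c i)) ->
  y = \sum_i c i * b i -> forall i, coord S b y i = c i.
Proof.
move=> sp ind yK cc ey.
have [dc ey'] := coordP sp yK.
move=> i; apply/eqP; rewrite -subr_eq0; apply/eqP; move: i.
apply: ind; first by move=> i; apply: cenB.
by under eq_bigr do rewrite mulrBl; rewrite sumrB -ey' -ey subrr.
Qed.

Definition toF (D : unitRingType) (S : seq D) (y : D) : FT S := insubd 0 y.

Lemma toFK (D : unitRingType) (S : seq D) y : divsub_center S y -> val (toF S y) = y.
Proof. by move=> h; rewrite /toF insubdK //; apply/cenP. Qed.

Definition Mat (D : unitRingType) (S : seq D) m (b : 'I_m -> D) (a : D) : 'M[FT S]_m :=
  \matrix_(i, j) toF S (coord S b (a * b j) i).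

Lemma MatE (D : unitRingType) (S : seq D) m (b : 'I_m -> D) a i j :
  spans S b -> divsub S a -> val (Mat S b a i j) = coord S b (a * b j) i.
Proof.
move=> sp aK; rewrite mxE toFK //.
by have [] := coordP sp (divsub_mul aK (proj1 sp j)).
Qed.

Lemma MatM (D : unitRingType) (S : seq D) m (b : 'I_m -> D) a1 a2 :
  spans S b -> indep S b -> divsub S a1 -> divsub S a2 ->
  Mat S b (a1 * a2) = Mat S b a1 *m Mat S b a2.
Proof.
move=> sp ind K1 K2; have bK := proj1 sp.
apply/matrixP => i j; apply: val_inj; rewrite MatE //; last exact: divsub_mul.
rewrite mxE fval_sum.
under eq_bigr do rewrite fvalM !MatE //.
move: i; apply: coord_uniq => //.
- by apply: divsub_mul; [apply: divsub_mul|].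
- move=> i; apply: cen_sum => k; apply: cenM; apply coordP => //;
  by apply: divsub_mul.
have [e2c e2] := coordP sp (divsub_mul K2 (bK j)).
rewrite -mulrA {1}e2 mulr_sumr.
under eq_bigr => k _.
  rewrite mulrA -(proj2 (e2c k)) // -mulrA.
  have [f1c f1] := coordP sp (divsub_mul K1 (bK k)).
  rewrite {1}f1 mulr_sumr.
  over.
rewrite exchange_big /=; apply: eq_bigr => i _.
rewrite mulr_suml; apply: eq_bigr => k _.
rewrite mulrA; congr (_ * _).
have [f1c _] := coordP sp (divsub_mul K1 (bK k)).
by apply: (proj2 (e2c k)); apply f1c.
Qed.

Lemma Matc (D : unitRingType) (S : seq D) m (b : 'I_m -> D) x :
  spans S b -> indep S b -> divsub_center S x ->
  Mat S b x = (toF S x)%:M.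
Proof.
move=> sp ind xc; have bK := proj1 sp.
apply/matrixP => i j; apply: val_inj.
rewrite MatE //; last exact: (proj1 xc).
rewrite mxE rmorphMn /= toFK //.
move: i; apply: coord_uniq => //.
- by apply: divsub_mul => //; apply: (proj1 xc).
- by move=> i; case: (i == j); rewrite ?mulr1n ?mulr0n //; apply: cen0.
rewrite (bigD1 j) //= eqxx mulr1n big1 ?addr0 //.
by move=> i /negbTE; rewrite eq_sym => ->; rewrite mulr0n mul0r.
Qed.

Lemma herstein (D : unitRingType) (x : D) :
  is_division_ring D -> x \is a GRing.unit ->
  (forall y, derived y -> x * y = y * x) -> forall b, x * b = b * x.
Proof.
move=> hD ux hc.
have conj : forall y, y != 0 -> x * (y * x * y^-1) = (y * x * y^-1) * x.
  move=> y y0.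
  have ey : y * x * y^-1 = (y * x * y^-1 * x^-1) * x by rewrite divrK.
  have x0 : x != 0 by apply: contraTneq ux => ->; rewrite unitr0.
  by rewrite ey mulrA hc //; apply: derived_comm.
move=> b.
have [->|b0] := eqVneq b 0; first by rewrite mulr0 mul0r.
have [e1|b1] := eqVneq (1 + b) 0.
  have -> : b = -1 by apply/eqP; rewrite -addr_eq0 addrC e1.
  by rewrite mulrN1 mulN1r.
have ub : b \is a GRing.unit by apply: hD.
have ub1 : (1 + b) \is a GRing.unit by apply: hD.
set w := b * x * b^-1; set u := (1 + b) * x * (1 + b)^-1.
have cw : x * w = w * x by apply: conj.
have cu : x * u = u * x by apply: conj.
have wb : w * b = b * x by rewrite /w divrK.
have ub' : u * (1 + b) = (1 + b) * x by rewrite /u divrK.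
have key : (w - u) * b = u - x.
  move: ub'; rewrite mulrDr mulr1 mulrDl mul1r -wb => h.
  have hE : w * b = u + u * b - x by rewrite h [x + _]addrC addrK.
  by rewrite mulrBl hE [u + _ - x]addrAC addrK.
have z : (w - u) * (x * b - b * x) = 0.
  have cwu : (w - u) * x = x * (w - u) by rewrite mulrBl mulrBr cw cu.
  rewrite mulrBr mulrA cwu -mulrA key [(w - u) * (b * x)]mulrA key.
  by rewrite mulrBr mulrBl cu subrr.
have [e|ne] := eqVneq (w - u) 0.
  move: key; rewrite e mul0r => /eqP; rewrite eq_sym subr_eq0 => /eqP ux'.
  move/eqP: e; rewrite subr_eq0 => /eqP e.
  by rewrite -wb e ux'.
have uw : (w - u) \is a GRing.unit by apply: hD.
apply/eqP; rewrite -subr_eq0; apply/eqP.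
by rewrite -(mulKr uw (x * b - b * x)) z mulr0.
Qed.

Definition Good (D : unitRingType) (S : seq D) (a : D) :=
  divsub S a /\ a \is a GRing.unit /\
  forall m (b : 'I_m -> D), spans S b -> indep S b -> \det (Mat S b a) = 1.

Lemma Mat1 (D : unitRingType) (S : seq D) m (b : 'I_m -> D) :
  spans S b -> indep S b -> Mat S b 1 = 1%:M.
Proof.
move=> sp ind; rewrite Matc //; last exact: cen1.
by congr (_%:M); apply: val_inj; rewrite toFK ?rmorph1 //; apply: cen1.
Qed.

Lemma detV (D : unitRingType) (S : seq D) m (b : 'I_m -> D) a :
  spans S b -> indep S b -> divsub S a -> a \is a GRing.unit ->
  \det (Mat S b a) * \det (Mat S b a^-1) = 1.
Proof.
move=> sp ind aK ua.
rewrite -det_mulmx -MatM //; last exact: divsub_inv.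
by rewrite mulrV // Mat1 // det1.
Qed.

Lemma divsub_mono (D : unitRingType) (S0 S : seq D) a :
  {subset S0 <= S} -> divsub S0 a -> divsub S a.
Proof.
move=> sub; elim=> [x /sub h||a1 b1 _ h1 _ h2|a1 b1 _ h1 _ h2|a1 _ h1].
- exact: divsub_mem.
- exact: divsub_one.
- exact: divsub_sub.
- exact: divsub_mul.
- exact: divsub_inv.
Qed.

Lemma mem_cat_l' (T : eqType) (s1 s2 : seq T) z : z \in s1 -> z \in s1 ++ s2.
Proof. by rewrite mem_cat => ->. Qed.
Lemma mem_cat_r' (T : eqType) (s2 s1 : seq T) z : z \in s2 -> z \in s1 ++ s2.
Proof. by rewrite mem_cat => ->; rewrite orbT. Qed.

Lemma derived_good (D : unitRingType) (a : D) :
  is_division_ring D -> derived a ->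
  exists S0 : seq D, forall S, {subset S0 <= S} -> Good S a.
Proof.
move=> hD; elim=> [x y x0 y0|a1 b1 _ [S1 h1] _ [S2 h2]|a1 _ [S1 h1]].
- exists [:: x; y] => S sub.
  have xK : divsub S x by apply: divsub_mem; apply: sub; rewrite inE eqxx.
  have yK : divsub S y by apply: divsub_mem; apply: sub; rewrite !inE eqxx orbT.
  have ux : x \is a GRing.unit by apply: hD.
  have uy : y \is a GRing.unit by apply: hD.
  split; first by repeat (apply: divsub_mul || apply: divsub_inv).
  split; first by rewrite !unitrMl ?unitrV.
  move=> m b sp ind.
  rewrite !MatM //; try by repeat (apply: divsub_mul || apply: divsub_inv).
  rewrite !det_mulmx.
  have := detV sp ind xK ux; have := detV sp ind yK uy.
  set dx := \det (Mat S b x); set dy := \det (Mat S b y).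
  set dx' := \det _; set dy' := \det _ => hy hx.
  have -> : dx * dy * dy' * dx' = (dx * dy') * (dy * dx') by ring.
  by rewrite hx hy mulr1.
- exists (S1 ++ S2) => S sub.
  have [K1 [u1 d1]] := h1 S (fun z hz => sub z (mem_cat_l' _ hz)).
  have [K2 [u2 d2]] := h2 S (fun z hz => sub z (mem_cat_r' _ hz)).
  split; first exact: divsub_mul.
  split; first by rewrite unitrMl.
  by move=> m b sp ind; rewrite MatM // det_mulmx d1 // d2 // mulr1.
- exists S1 => S sub; have [K1 [u1 d1]] := h1 S sub.
  split; first exact: divsub_inv.
  split; first by rewrite unitrV.
  move=> m b sp ind; have := detV sp ind K1 u1.
  by rewrite d1 // mul1r.
Qed.


Theorem lemma6p2 (D : unitRingType) :
  is_division_ring D -> weakly_locally_finite D ->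
  forall x : D, derived_center x -> exists n : nat, (0 < n)%N /\ x ^+ n = 1.
Proof.
move=> hD hW x [dx cx].
have [S0 hS] := derived_good hD dx.
have [xK [ux dt]] := hS S0 (fun z h => h).
have xc : forall b, x * b = b * x by apply: herstein.
have xF : divsub_center S0 x by split => // y _; apply: xc.
have [m [b [sp ind]]] := exists_basis hD (hW S0).
exists m; split.
  case: m b sp ind {dt} => // b [_ sp] _.
  have [c [_ e]] := sp 1 (divsub_one S0).
  by move: e; rewrite big_ord0 => /eqP; rewrite oner_eq0.
have := dt m b sp ind; rewrite Matc // det_scalar => /(congr1 val).
by rewrite rmorphXn rmorph1 /= toFK.
Qed.
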